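(* Let $V$ be a finite-dimensional real vector space with a seminorm $|\cdot|_V$, and let $\sigma$ be a zonal representation of $|\cdot|_V$. Then for every set $X$, every $\sigma$-algebra $\Sigma$ on $X$, every vector measure $\mu:\Sigma\to V$ and every $A\in\Sigma$, $$|\mu|_V(A)=\int_{V'}|\langle\eta,\mu\rangle|_{\mathbb{R}}(A)\,d\sigma(\eta).$$
   Context: $V'$ is the set of linear forms $\eta$ on $V$ with finite dual seminorm $|\eta|_{V'}=\sup\{\eta(v):|v|_V\le1\}$. A zonal representation of $|\cdot|_V$ is a locally finite nonnegative Borel measure $\sigma$ on $V'$ such that $\int_{V'}|\eta|_{V'}\,d\sigma(\eta)<\infty$ and $|v|_V=\int_{V'}|\eta(v)|\,d\sigma(\eta)$ for all $v\in V$. A vector measure is a countably additive map $\mu:\Sigma\to V$; total variation: $|\mu|_V(A)=\sup\{\sum_{i=1}^m|\mu(E_i)|_V : E_1,\dots,E_m\in\Sigma \text{ pairwise disjoint subsets of } A\}$. For $\eta\in V'$, $\langle\eta,\mu\rangle$ is the signed measure $E\mapsto\eta(\mu(E))$ and $|\langle\eta,\mu\rangle|_{\mathbb{R}}$ its total variation with respect to the absolute value. *)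

(* Defs.v *)
From HB Require Import structures.
From mathcomp Require Import all_boot all_order all_algebra.
From mathcomp Require Import all_classical all_reals all_analysis.
Set Implicit Arguments. Unset Strict Implicit. Unset Printing Implicit Defensive.
Import Order.TTheory GRing.Theory Num.Theory.
Import numFieldNormedType.Exports.
Local Open Scope classical_set_scope.
Local Open Scope ring_scope.

(* The finite-dimensional real vector space V is modelled as 'rV[R]_n
   (every n-dimensional real vector space is isomorphic to it).  Linear
   forms on 'rV[R]_n are represented by their coordinate vectors, also in
   'rV[R]_n, via the pairing below. *)
Definition pairing (R : realType) (n : nat) (eta v : 'rV[R]_n) : R :=
  \sum_(i < n) eta ord0 i * v ord0 i.

Definition seminorm (R : realType) (n : nat) (N : 'rV[R]_n -> R) : Prop :=
  (forall u v, N (u + v) <= N u + N v) /\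
  (forall (a : R) v, N (a *: v) = `|a| * N v).

Definition dual_seminorm (R : realType) (n : nat) (N : 'rV[R]_n -> R)
    (eta : 'rV[R]_n) : \bar R :=
  ereal_sup [set (pairing eta v)%:E | v in [set v | N v <= 1]].

Definition dual_space (R : realType) (n : nat) (N : 'rV[R]_n -> R)
    : set 'rV[R]_n :=
  [set eta | (dual_seminorm N eta < +oo)%E].

Definition borel_forms (R : realType) (n : nat) :=
  g_sigma_algebraType (@open 'rV[R]_n).

Definition locally_finite (R : realType) (n : nat)
    (sigma : set (borel_forms R n) -> \bar R) : Prop :=
  forall eta : 'rV[R]_n, exists U : set 'rV[R]_n,
    [/\ open U, U eta & (sigma U < +oo)%E].

Definition zonal_representation (R : realType) (n : nat)
    (N : 'rV[R]_n -> R) (sigma : {measure set (borel_forms R n) -> \bar R}) :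
    Prop :=
  [/\ locally_finite sigma,
      (\int[sigma]_(eta in dual_space N) dual_seminorm N eta < +oo)%E &
      forall v : 'rV[R]_n,
        (N v)%:E = (\int[sigma]_(eta in dual_space N) `|pairing eta v|%:E)%E].

Definition vector_measure (d : measure_display) (X : measurableType d)
    (R : realType) (n : nat) (mu : set X -> 'rV[R]_n) : Prop :=
  forall F : nat -> set X, (forall i, measurable (F i)) -> trivIset setT F ->
    (fun k => \sum_(i < k) mu (F i)) @ \oo --> mu (\bigcup_i F i).

Definition vtotal_variation (d : measure_display) (X : measurableType d)
    (R : realType) (T : Type) (nu : T -> R) (m : set X -> T) (A : set X)
    : \bar R :=
  ereal_sup [set x | exists (k : nat) (E : 'I_k -> set X),
    [/\ forall i, measurable (E i) /\ E i `<=` A,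
        forall i j, i != j -> E i `&` E j = set0 &
        x = (\sum_(i < k) nu (m (E i)))%:E]].

(* Main.v *)
Require Import Defs.
From HB Require Import structures.
From mathcomp Require Import all_boot all_order all_algebra.
From mathcomp Require Import all_classical all_reals all_analysis.
From mathcomp Require Import measurable_realfun.
Import Order.TTheory GRing.Theory Num.Theory.
Import numFieldNormedType.Exports.
Local Open Scope classical_set_scope.
Local Open Scope ring_scope.


Section cvgsum.
Context (R : realType).
Lemma cvg_bigsum {T : Type} (F : set_system T) {FF : Filter F} m
  (u : 'I_m -> T -> R) (l : 'I_m -> R) :
  (forall i, u i x @[x --> F] --> l i) ->
  (\sum_(i < m) u i x) @[x --> F] --> \sum_(i < m) l i.
Proof.
elim: m u l => [|m IH] u l h.
  rewrite big_ord0; under eq_fun do rewrite big_ord0; exact: cvg_cst.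
rewrite big_ord_recr /=; under eq_fun do rewrite big_ord_recr /=.
apply: cvgD; last exact: h.
exact: (IH (fun i => u (widen_ord (leqnSn m) i)) (fun i => l (widen_ord (leqnSn m) i))).
Qed.
End cvgsum.

Section VM.
Set Implicit Arguments. Unset Strict Implicit.
Context (R : realType) (n : nat) (d : measure_display) (X : measurableType d).
Variable mu : set X -> 'rV[R]_n.
Hypothesis hmu : vector_measure mu.

Lemma mu0 : mu set0 = 0.
Proof.
have := @hmu (fun _ => set0) (fun _ => measurable0) _.
have tr : trivIset setT (fun _ : nat => @set0 X) by move=> i j _ _ [x []].
move/(_ tr); rewrite bigcup0 // => h.
have h1 : (fun k => mu set0 *+ k.+1) @ \oo --> mu set0.
  have := h; rewrite -(cvg_shiftS) /=.
  by apply: cvg_trans; apply: near_eq_cvg; near=> k; rewrite sumr_const card_ord.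
have h0 : (fun k => mu set0 *+ k) @ \oo --> mu set0.
  by apply: cvg_trans h; apply: near_eq_cvg; near=> k; rewrite sumr_const card_ord.
have h2 : (fun k => mu set0 *+ k.+1 - mu set0 *+ k) @ \oo --> mu set0 - mu set0.
  exact: cvgB.
rewrite subrr in h2.
have h3 : (fun k => mu set0 *+ k.+1 - mu set0 *+ k) = fun _ => mu set0.
  by apply/funext => k; rewrite mulrSr addrAC subrr add0r.
rewrite h3 in h2.
apply: (cvg_unique _ _ h2); last exact: cvg_cst.
exact: norm_hausdorff.
Unshelve. all: by end_near.
Qed.

Lemma muU (B C : set X) : measurable B -> measurable C -> B `&` C = set0 ->
  mu (B `|` C) = mu B + mu C.
Proof.
move=> mB mC BC.
pose F := fun i : nat => if i == 0%N then B else if i == 1%N then C else set0.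
have mF : forall i, measurable (F i).
  by move=> [|[|i]]; rewrite /F /=.
have tF : trivIset setT F.
  { move=> [|[|i]] [|[|j]] _ _ //= [x [Fi Fj]]; rewrite /F /= in Fi Fj.
  all: exfalso; try (by case: Fi); try (by case: Fj).
  all: by move: BC; rewrite -subset0 => /(_ x); apply; split. }
have UF : \bigcup_i F i = B `|` C.
  apply/seteqP; split.
    by move=> x [[|[|i]] _ /= Fx]; [left|right|case: Fx].
  by move=> x [Bx|Cx]; [exists 0%N|exists 1%N].
have := @hmu F mF tF; rewrite UF => h.
apply: (cvg_unique _ h); first exact: norm_hausdorff.
have hc : (fun k => \sum_(i < k) mu (F i)) @ \oo `=>` (fun k : nat => mu B + mu C) @ \oo.
  apply: near_eq_cvg; near=> k.
have k2 : (2 <= k)%N by near: k; exists 2%N.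
rewrite -(subnKC k2) big_split_ord /= big_ord_recl big_ord_recl big_ord0 /=.
rewrite big1 ?addr0 // => i _; rewrite /F /=.
  exact: mu0.
apply: cvg_trans hc _; exact: cvg_cst.
Unshelve. all: by end_near.
Qed.

Lemma mu_seq (I : eqType) (r : seq I) (F : I -> set X) :
  uniq r -> (forall i, measurable (F i)) ->
  (forall i j, i != j -> F i `&` F j = set0) ->
  measurable [set x | exists2 i, i \in r & F i x] /\
  mu [set x | exists2 i, i \in r & F i x] = \sum_(i <- r) mu (F i).
Proof.
move=> ur mF dF; elim: r ur => [|a r IH] /=.
  move=> _; have -> : [set x | exists2 i, i \in [::] & F i x] = set0.
    by apply/seteqP; split => x //= [].
  by rewrite big_nil mu0.
move=> /andP[ar ur]; have [mr er] := IH ur.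
have -> : [set x | exists2 i, i \in a :: r & F i x] =
          F a `|` [set x | exists2 i, i \in r & F i x].
  apply/seteqP; split => x /=.
    by move=> [i]; rewrite inE => /orP[/eqP -> | ir] Fx; [left|right; exists i].
  by move=> [Fx|[i ir Fx]]; [exists a; rewrite ?inE ?eqxx|exists i; rewrite ?inE ?ir ?orbT].
split; first exact: measurableU.
rewrite big_cons muU // ?er //.
apply/seteqP; split => x // [Fax [i ir Fix]].
have ai : a != i by apply: contraNneq ar => ->.
by have := dF _ _ ai; rewrite -subset0 => /(_ x); apply.
Qed.

Lemma mu_fin (I : finType) (P : pred I) (F : I -> set X) :
  (forall i, measurable (F i)) ->
  (forall i j, i != j -> F i `&` F j = set0) ->
  measurable [set x | exists i, P i /\ F i x] /\
  mu [set x | exists i, P i /\ F i x] = \sum_(i | P i) mu (F i).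
Proof.
move=> mF dF.
have := @mu_seq I [seq i <- index_enum I | P i] F _ mF dF.
rewrite filter_uniq ?index_enum_uniq // => /(_ isT).
have -> : [set x | exists2 i, i \in [seq i <- index_enum I | P i] & F i x] =
          [set x | exists i, P i /\ F i x].
  apply/seteqP; split => x /=.
    by move=> [i]; rewrite mem_filter => /andP[Pi _] Fx; exists i.
  by move=> [i [Pi Fx]]; exists i => //; rewrite mem_filter Pi mem_index_enum.
by rewrite big_filter.
Qed.

Lemma pairing_sum (I : Type) (r : seq I) (P : pred I) (w : I -> 'rV[R]_n) eta :
  pairing eta (\sum_(i <- r | P i) w i) = \sum_(i <- r | P i) pairing eta (w i).
Proof.
rewrite /pairing; under eq_bigr do rewrite summxE mulr_sumr.
by rewrite exchange_big.
Qed.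

Lemma pairingDl (a b v : 'rV[R]_n) : pairing (a + b) v = pairing a v + pairing b v.
Proof. by rewrite /pairing -big_split; apply: eq_bigr => i _; rewrite mxE mulrDl. Qed.

Definition ps (I : finType) (C : I -> set X) eta :=
  \sum_(i : I) `|pairing eta (mu (C i))|.

Definition part (A : set X) (I : finType) (C : I -> set X) :=
  (forall i, measurable (C i) /\ C i `<=` A) /\
  (forall i j, i != j -> C i `&` C j = set0).

Lemma psD (I : finType) (C : I -> set X) a b : ps C (a + b) <= ps C a + ps C b.
Proof.
rewrite /ps -big_split /=; apply: ler_sum => i _.
by rewrite pairingDl ler_normD.
Qed.

Lemma refine (I J : finType) (C : I -> set X) (D : J -> set X) (f : I -> J) eta :
  (forall i, measurable (C i)) -> (forall i i', i != i' -> C i `&` C i' = set0) ->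
  (forall j, D j = [set x | exists i, f i == j /\ C i x]) ->
  ps D eta <= ps C eta.
Proof.
move=> mC dC DE; rewrite /ps.
rewrite (partition_big f predT) //=; apply: ler_sum => j _.
rewrite DE (mu_fin (fun i => f i == j) mC dC).2 pairing_sum.
exact: ler_norm_sum.
Qed.

Definition nuc (eta : 'rV[R]_n) : set X -> \bar R := fun E => (pairing eta (mu E))%:E.

Let nuc0 eta : nuc eta set0 = 0%E.
Proof. by rewrite /nuc mu0 /pairing big1 // => i _; rewrite mxE mulr0. Qed.

Let nuc_fin eta : forall x, d.-measurable x -> nuc eta x \is a fin_num.
Proof. by []. Qed.

Let nuc_sa eta : semi_sigma_additive (nuc eta).
Proof.
move=> F mF tF mU; rewrite /nuc.
have h := hmu mF tF.
have : (fun k => pairing eta (\sum_(i < k) mu (F i))) @ \oo --> pairing eta (mu (\bigcup_n F n)).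
  rewrite /pairing.
  have := (@cvg_bigsum R nat \oo _ n (fun i k => eta ord0 i * (\sum_(j < k) mu (F j)) ord0 i)
     (fun i => eta ord0 i * mu (\bigcup_n F n) ord0 i)).
  apply.
  move=> i; apply: cvgM; first exact: cvg_cst.
  have hc := @coord_continuous R 1 n ord0 i (mu (\bigcup_n F n)).
  exact: (cvg_comp _ _ h hc).
move=> hp.
rewrite [X in X @ _ --> _](_ : _ = fun k => (pairing eta (\sum_(i < k) mu (F i)))%:E); last first.
  by apply/funext => k; rewrite sumEFin big_mkord pairing_sum.
apply: cvg_EFin; first exact: nearW.
exact: hp.
Qed.

HB.instance Definition _ eta := isCharge.Build d X R (nuc eta) (@nuc0 eta) (@nuc_fin eta) (@nuc_sa eta).

Lemma hahn eta : exists P : set X, [/\ measurable P,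
  (forall E, measurable E -> E `<=` P -> 0 <= pairing eta (mu E)) &
  (forall E, measurable E -> E `<=` ~` P -> pairing eta (mu E) <= 0)].
Proof.
have [P [N [[mP hP] [mN hN] PN PN0]]] := Hahn_decomposition (nuc eta).
exists P; split => //.
move=> E mE EP; have : E `<=` N.
  move=> x Ex; have : (P `|` N) x by rewrite PN.
  by case => // /(EP x Ex).
by move=> /(hN E mE); rewrite /nuc lee_fin.
Qed.

Lemma pairingDr (eta u v : 'rV[R]_n) : pairing eta (u + v) = pairing eta u + pairing eta v.
Proof. by rewrite /pairing -big_split; apply: eq_bigr => i _; rewrite mxE mulrDr. Qed.

Lemma mu_split (B S : set X) : measurable B -> measurable S -> S `<=` B ->
  mu B = mu S + mu (B `&` ~` S).
Proof.
move=> mB mS SB; rewrite -muU //; last 2 first.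
- exact: measurableI (measurableC mS).
- by apply/seteqP; split => x // [Sx [_ ]].
congr (mu _); apply/seteqP; split => x.
  by move=> Bx; have [Sx|nSx] := pselect (S x); [left|right].
by move=> [/SB|[]].
Qed.

Lemma hahn_bound eta (A P : set X) : measurable A -> measurable P ->
  (forall E, measurable E -> E `<=` P -> 0 <= pairing eta (mu E)) ->
  (forall E, measurable E -> E `<=` ~` P -> pairing eta (mu E) <= 0) ->
  forall (I : finType) (C : I -> set X), part A C ->
  ps C eta <= `|pairing eta (mu (A `&` P))| + `|pairing eta (mu (A `&` ~` P))|.
Proof.
move=> mA mP hP hN I C [hC dC].
have mC i : measurable (C i) by case: (hC i).
pose G i := C i `&` P; pose K i := C i `&` ~` P.
have mG i : measurable (G i) by exact: measurableI.
have mK i : measurable (K i) by apply: measurableI => //; exact: measurableC.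
have dG i j : i != j -> G i `&` G j = set0.
  move=> ij; apply/seteqP; split => x // [[Cix _] [Cjx _]].
  by have := dC i j ij; rewrite -subset0 => /(_ x); apply.
have dK i j : i != j -> K i `&` K j = set0.
  move=> ij; apply/seteqP; split => x // [[Cix _] [Cjx _]].
  by have := dC i j ij; rewrite -subset0 => /(_ x); apply.
have step i : `|pairing eta (mu (C i))| <= pairing eta (mu (G i)) - pairing eta (mu (K i)).
  rewrite (@mu_split (C i) (G i)) //; last by move=> x [].
  have -> : C i `&` ~` G i = K i.
    apply/seteqP; split => x; first by move=> [Cx nG]; split => // Px; apply: nG.
    by move=> [Cx nP]; split => // -[].
  rewrite pairingDr.
  have h1 := hP (G i) (mG i) (fun x => @proj2 _ _).
  have h2 := hN (K i) (mK i) (fun x => @proj2 _ _).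
  rewrite (le_trans (ler_normD _ _)) // (ger0_norm h1) (ler0_norm h2) //.
have [mUG eUG] := mu_fin predT mG dG.
have [mUK eUK] := mu_fin predT mK dK.
set UG := [set x | exists i, predT i /\ G i x] in mUG eUG.
set UK := [set x | exists i, predT i /\ K i x] in mUK eUK.
have UGs : UG `<=` A `&` P.
  by move=> x [i [_ [Cx Px]]]; split => //; case: (hC i) => _; apply.
have UKs : UK `<=` A `&` ~` P.
  by move=> x [i [_ [Cx Px]]]; split => //; case: (hC i) => _; apply.
have mAP : measurable (A `&` P) by exact: measurableI.
have mAN : measurable (A `&` ~` P) by apply: measurableI => //; exact: measurableC.
have e1 := mu_split mAP mUG UGs.
have e2 := mu_split mAN mUK UKs.
have r1 : pairing eta (mu UG) <= pairing eta (mu (A `&` P)).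
  rewrite e1 pairingDr lerDl; apply: hP.
    by apply: measurableI => //; exact: measurableC.
  by move=> x [[]].
have r2 : pairing eta (mu (A `&` ~` P)) <= pairing eta (mu UK).
  rewrite e2 pairingDr gerDl; apply: hN.
    by apply: measurableI => //; exact: measurableC.
  by move=> x [[]].
apply: (le_trans (ler_sum _ (fun i _ => step i))).
rewrite sumrB -!pairing_sum -eUG -eUK.
apply: (le_trans (lerB r1 r2)).
by apply: lerD; [exact: ler_norm | rewrite -normrN; exact: ler_norm].
Qed.

Lemma TV_ub (T : Type) (f : T -> R) (nu : set X -> T) (A : set X)
  (I : finType) (C : I -> set X) : part A C ->
  ((\sum_(i : I) f (nu (C i)))%:E <= vtotal_variation f nu A)%E.
Proof.
move=> [hC dC]; apply: ereal_sup_ubound; exists #|I|, (fun i => C (enum_val i)); split.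
- by move=> i; exact: hC.
- move=> i j ij; apply: dC; apply: contra ij => /eqP/enum_val_inj ->.
  by [].
- congr EFin; rewrite (reindex (@enum_val I (pred_of_simpl predT))) //; exists enum_rank => i _; [exact: enum_valK | exact: enum_rankK].
Qed.

Lemma bigI_mem (I : eqType) (r : seq I) (G : I -> set X) x :
  (\big[setI/setT]_(i <- r) G i) x <-> forall i, i \in r -> G i x.
Proof.
elim: r => [|a r IH]; first by rewrite big_nil; split.
rewrite big_cons; split.
  by move=> [Ga /IH Gr] i; rewrite inE => /orP[/eqP ->|/Gr].
move=> h; split; first by apply: h; rewrite inE eqxx.
by apply/IH => i ir; apply: h; rewrite inE ir orbT.
Qed.

Definition cell (A : set X) (H : nat -> set X) (N : nat) (b : {ffun 'I_N -> bool}) : set X :=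
  A `&` \big[setI/setT]_(i < N) (if b i then H i else ~` H i).
Arguments cell : clear implicits.

Lemma cellP A H N b x : cell A H N b x <-> A x /\ forall i : 'I_N, (x \in H i) = b i.
Proof.
rewrite /cell; split.
  move=> [Ax /bigI_mem h]; split => // i; have := h i (mem_index_enum _).
  by case: (b i) => hi; [exact: mem_set | apply/negbTE/negP => /set_mem].
move=> [Ax h]; split => //; apply/bigI_mem => i _; rewrite -h.
by case: ifPn => [/set_mem|/negP hn] // Hx; apply: hn; exact: mem_set.
Qed.

Lemma cell_part A H N : measurable A -> (forall i, measurable (H i)) ->
  part A (cell A H N).
Proof.
move=> mA mH; split.
  move=> b; split; last by move=> x [].
  apply: measurableI => //; apply: big_ind => //.
  - by move=> U V; exact: measurableI.
  - by move=> i _; case: (b i) => //; exact: measurableC.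
move=> b b' bb'; apply/seteqP; split => x // [/cellP [_ h1] /cellP [_ h2]].
apply: (negP bb'); apply/eqP/ffunP => i.
by rewrite -h1 -h2.
Qed.

Definition addr (H : nat -> set X) N (x : X) : {ffun 'I_N -> bool} := [ffun i : 'I_N => x \in H (nat_of_ord i)].
Arguments addr : clear implicits.

Lemma addrP A H N x : A x -> cell A H N (addr H N x) x.
Proof. by move=> Ax; apply/cellP; split => // i; rewrite ffunE. Qed.

Definition restr N (b : {ffun 'I_N.+1 -> bool}) : {ffun 'I_N -> bool} :=
  [ffun i : 'I_N => b (widen_ord (leqnSn N) i)].

Lemma cell_restr A H N (b' : {ffun 'I_N -> bool}) :
  cell A H N b' = [set x | exists b, restr b == b' /\ cell A H N.+1 b x].
Proof.
apply/seteqP; split => x.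
  move=> /cellP [Ax h]; exists (addr H N.+1 x); split; last exact: addrP.
  by apply/eqP/ffunP => i; rewrite !ffunE -h.
move=> [b [/eqP <- /cellP [Ax h]]]; apply/cellP; split => // i.
by rewrite ffunE -h.
Qed.

Lemma cell_two A H N m (hm : (m < N)%N) (j : bool) :
  A `&` (if j then H m else ~` H m) =
  [set x | exists b : {ffun 'I_N -> bool}, b (Ordinal hm) == j /\ cell A H N b x].
Proof.
apply/seteqP; split => x.
  move=> [Ax Hx]; exists (addr H N x); split; last exact: addrP.
  rewrite ffunE /=; case: j Hx => Hx; first by rewrite mem_set.
  by apply/eqP/negbTE/negP => /set_mem.
move=> [b [/eqP <- /cellP [Ax h]]]; split => //.
rewrite -h /=; case: ifPn => [/set_mem|/negP hn] // Hx; apply: hn; exact: mem_set.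
Qed.

Lemma pairing_delta (j : 'I_n) (v : 'rV[R]_n) : pairing (delta_mx ord0 j) v = v ord0 j.
Proof.
rewrite /pairing (bigD1 j) //= big1 ?addr0; first by rewrite mxE !eqxx mul1r.
by move=> i ij; rewrite mxE eqxx /= (negbTE ij) ?mul0r // eq_sym (negbTE ij) mul0r.
Qed.

Lemma ps_bound (I : finType) (C : I -> set X) (dl : 'rV[R]_n) :
  ps C dl <= \sum_(j < n) `|dl ord0 j| * ps C (delta_mx ord0 j).
Proof.
rewrite /ps; under [X in _ <= X]eq_bigr do rewrite mulr_sumr.
rewrite exchange_big /=; apply: ler_sum => i _.
under [X in _ <= X]eq_bigr do rewrite pairing_delta.
rewrite /pairing (le_trans (ler_norm_sum _ _ _)) //; apply: ler_sum => j _.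
by rewrite normrM.
Qed.

Definition qseq (m : nat) : 'rV[R]_n :=
  match @unpickle 'rV[rat]_n m with Some r => map_mx ratr r | None => 0 end.

Lemma dense_q (eta : 'rV[R]_n) e : 0 < e -> exists m, forall j, `|eta ord0 j - qseq m ord0 j| < e.
Proof.
move=> e0.
have h j : exists r : rat, `|eta ord0 j - ratr r| < e.
  have lt : eta ord0 j - e < eta ord0 j + e.
    by rewrite ltrD2l (@lt_trans _ _ 0) // oppr_lt0.
  have [r hr] := @rat_in_itvoo R (eta ord0 j - e) (eta ord0 j + e) lt.
  by exists r; rewrite ltr_distlC; rewrite in_itv /= in hr.
have [f hf] := choice h.
exists (pickle (\row_j f j : 'rV[rat]_n)) => j.
by rewrite /qseq pickleK mxE mxE.
Qed.

Lemma approx (A : set X) : measurable A -> exists H : nat -> set X,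
  (forall i, measurable (H i)) /\
  forall eta e, 0 < e -> exists N, forall (I : finType) (C : I -> set X),
    part A C -> ps C eta <= ps (cell A H N) eta + e.
Proof.
move=> mA.
have [HP hHP] := choice hahn.
pose H m := HP (qseq m).
have mH : forall i, measurable (H i) by move=> i; case: (hHP (qseq i)).
exists H; split => // eta e e0.
have hb : forall w (I : finType) (C : I -> set X), part A C ->
    ps C w <= `|pairing w (mu (A `&` HP w))| + `|pairing w (mu (A `&` ~` HP w))|.
  move=> w I C pC; case: (hHP w) => mP hP hN; exact: hahn_bound.
pose t (j : 'I_n) := `|pairing (delta_mx ord0 j) (mu (A `&` HP (delta_mx ord0 j)))|
  + `|pairing (delta_mx ord0 j) (mu (A `&` ~` HP (delta_mx ord0 j)))|.
pose K := \sum_(j < n) t j.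
have K0 : 0 <= K by apply: sumr_ge0 => j _; rewrite addr_ge0.
have psK : forall (I : finType) (C : I -> set X) (dl : 'rV[R]_n) c, part A C ->
    (forall j, `|dl ord0 j| <= c) -> 0 <= c -> ps C dl <= c * K.
  move=> I C dl c pC hc c0; apply: (le_trans (ps_bound C dl)).
  rewrite /K mulr_sumr; apply: ler_sum => j _.
  apply: ler_pM => //; first by rewrite /ps; apply: sumr_ge0 => *.
  exact: hb.
pose e' := e / (2 * K + 1).
have K1 : 0 < 2 * K + 1 by rewrite ltr_wpDl // mulr_ge0.
have e'0 : 0 < e' by rewrite /e' divr_gt0.
have [m hm] := dense_q eta e'0.
exists m.+1 => I C pC.
have pcell := cell_part m.+1 mA mH.
have ltm : (m < m.+1)%N := ltnSn m.
set q := qseq m.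
have h1 : ps C eta <= ps C q + e' * K.
  rewrite {1}(_ : eta = q + (eta - q)); last by rewrite addrC subrK.
  apply: (le_trans (psD _ _ _)); rewrite lerD2l; apply: psK => //; last exact: ltW.
  by move=> j; rewrite !mxE; exact: ltW (hm j).
have h2 : ps C q <= ps (cell A H m.+1) q.
  apply: (le_trans (hb q I C pC)).
  have := @refine _ bool (cell A H m.+1) (fun j : bool => A `&` (if j then H m else ~` H m))
     (fun b => b (Ordinal ltm)) q.
  rewrite /ps big_bool /=; apply.
  - by move=> b; case: (pcell.1 b).
  - exact: pcell.2.
  by move=> j; exact: cell_two.
have h3 : ps (cell A H m.+1) q <= ps (cell A H m.+1) eta + e' * K.
  rewrite {1}(_ : q = eta + (q - eta)); last by rewrite addrC subrK.
  apply: (le_trans (psD _ _ _)); rewrite lerD2l; apply: psK => //; last exact: ltW.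
  by move=> j; rewrite !mxE distrC; exact: ltW (hm j).
have h4 : e' * K + e' * K <= e.
  have -> : e' * K + e' * K = e' * (2 * K) by rewrite -mulrDr mulr_natl mulr2n.
  have -> : e = e' * (2 * K + 1) by rewrite /e' divfK // gt_eqF.
  rewrite ler_wpM2l ?(ltW e'0) // mulr_natl lerDl //.
apply: (le_trans h1); apply: (le_trans (lerD (le_trans h2 h3) (lexx _))).
by rewrite -addrA lerD2l.
Qed.

Lemma g_nd A H N eta : measurable A -> (forall i, measurable (H i)) ->
  ps (cell A H N) eta <= ps (cell A H N.+1) eta.
Proof.
move=> mA mH; have [h1 h2] := cell_part N.+1 mA mH.
apply: (@refine _ _ (cell A H N.+1) (cell A H N) (@restr N)) => //.
- by move=> b; case: (h1 b).
- by move=> b'; rewrite cell_restr.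
Qed.
End VM.
Arguments cell {d X} A H N b.

Section cvgsum2.
Context (R : realType).
Lemma cvg_bigsum_seq {T J : Type} (F : set_system T) {FF : Filter F} (r : seq J)
  (u : J -> T -> R) (l : J -> R) :
  (forall i, u i x @[x --> F] --> l i) ->
  (\sum_(i <- r) u i x) @[x --> F] --> \sum_(i <- r) l i.
Proof.
move=> h; elim: r => [|a r IH].
  rewrite big_nil; under eq_fun do rewrite big_nil; exact: cvg_cst.
rewrite big_cons; under eq_fun do rewrite big_cons.
exact: cvgD.
Qed.
End cvgsum2.

Section Meas.
Context (R : realType) (n : nat).
Local Notation B := (borel_forms R n).

Lemma open_mble (U : set 'rV[R]_n) : open U -> measurable (U : set B).
Proof. by move=> oU; exact: sub_sigma_algebra. Qed.

Lemma cont_mble (f : 'rV[R]_n -> R) : continuous f -> measurable_fun setT (f : B -> R).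
Proof.
move=> cf; apply: (measurability _ (measurable_realfun.RGenOpens.measurableE R)).
move=> _ [_ [a [b ->]] <-]; rewrite setTI; apply: open_mble.
by move/continuousP: cf; apply; exact: interval_open.
Qed.

Lemma pairing_cont (v : 'rV[R]_n) : continuous (fun eta : 'rV[R]_n => pairing eta v).
Proof.
move=> eta; rewrite /pairing.
have := @cvg_bigsum_seq R _ _ (nbhs eta) _ (index_enum 'I_n) (fun i x => x ord0 i * v ord0 i)
  (fun i => eta ord0 i * v ord0 i); apply => i.
apply: cvgM; last exact: cvg_cst.
exact: coord_continuous.
Qed.

Lemma ps_cont (I : finType) (w : I -> 'rV[R]_n) :
  continuous (fun eta : 'rV[R]_n => \sum_(i : I) `|pairing eta (w i)|).
Proof.
move=> eta.
have := @cvg_bigsum_seq R _ _ (nbhs eta) _ (index_enum I) (fun i x => `|pairing x (w i)|)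
  (fun i => `|pairing eta (w i)|); apply => i.
apply: cvg_norm; exact: pairing_cont.
Qed.

Lemma dual_mble (nrm : 'rV[R]_n -> R) : measurable (dual_space nrm : set B).
Proof.
pose U (M : nat) := \bigcup_(v in [set v | nrm v <= 1]) [set eta : 'rV[R]_n | M%:R < pairing eta v].
have oU M : open (U M).
  apply: bigcup_open => v _.
  rewrite (_ : [set eta | _ < _] = (fun eta => pairing eta v) @^-1` `]M%:R, +oo[); last first.
    by apply/seteqP; split => x /=; rewrite in_itv /= andbT.
  by move/continuousP: (@pairing_cont v); apply; exact: interval_open.
have -> : dual_space nrm = \bigcup_M ~` U M.
  apply/seteqP; split => eta.
    rewrite /dual_space /= => hlt.
    set s := dual_seminorm nrm eta in hlt.
    have [M hM] : exists M : nat, (s <= M%:R%:E)%E.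
      move: hlt; case: s => [r| |] // _.
        exists (Num.Def.archi_bound `|r|); rewrite lee_fin.
        exact: le_trans (ler_norm r) (ltW (archi_boundP (normr_ge0 r))).
      by exists 0%N; rewrite leNye.
    exists M => // -[v nv ltv].
    have : ((pairing eta v)%:E <= s)%E.
      by apply: ereal_sup_ubound; exists v.
    move=> /le_trans /(_ hM); rewrite lee_fin => h.
    by move: (lt_le_trans ltv h); rewrite ltxx.
  move=> [M _ hM]; rewrite /dual_space /=.
  apply: (@le_lt_trans _ _ (M%:R%:E)); last exact: ltry.
  apply: ge_ereal_sup => _ [v nv <-]; rewrite lee_fin.
  by rewrite leNgt; apply/negP => ltv; apply: hM; exists v.
apply: bigcupT_measurable => M; apply: measurableC; exact: open_mble.
Qed.
End Meas.

Lemma abs_pairing_cont (R : realType) (n : nat) (v : 'rV[R]_n) :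
  continuous (fun eta : 'rV[R]_n => `|pairing eta v|).
Proof. move=> eta; have h : `|pairing x v| @[x --> nbhs eta] --> `|pairing eta v| by apply: cvg_norm; exact: pairing_cont. exact: h. Qed.

Theorem lemma4p2 (R : realType) (n : nat) (nrm : 'rV[R]_n -> R)
    (sigma : {measure set (borel_forms R n) -> \bar R}) :
  seminorm nrm -> zonal_representation nrm sigma ->
  forall (d : measure_display) (X : measurableType d)
    (mu : set X -> 'rV[R]_n) (A : set X),
  vector_measure mu -> measurable A ->
  vtotal_variation nrm mu A =
  (\int[sigma]_(eta in dual_space nrm)
     vtotal_variation (fun r : R => `|r|%R) (fun E => pairing eta (mu E)) A)%E.
Proof.
move=> _ [_ _ hzon] d X mu A hmu mA.
set Dsp := dual_space nrm.
have mD : measurable (Dsp : set (borel_forms R n)) := dual_mble nrm.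
have [H [mH happ]] := approx hmu mA.
pose g N eta := ps mu (cell A H N) eta.
pose T eta := vtotal_variation (fun r : R => `|r|%R) (fun E => pairing eta (mu E)) A.
rewrite -/T.
have pc N := cell_part N mA mH.
have gT N eta : ((g N eta)%:E <= T eta)%E.
  exact: (TV_ub (fun r : R => `|r|) (fun E => pairing eta (mu E)) (pc N)).
have ndg eta : {homo (fun N => g N eta) : a b / (a <= b)%N >-> a <= b}.
  by apply/nondecreasing_seqP => N; exact: g_nd.
have ndgE eta : {homo (fun N => (g N eta)%:E) : a b / (a <= b)%N >-> (a <= b)%E}.
  by move=> a b ab; rewrite lee_fin; exact: ndg.
have Tsup eta : T eta = ereal_sup (range (fun N => (g N eta)%:E)).
  apply/eqP; rewrite eq_le; apply/andP; split; last first.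
    by apply: ge_ereal_sup => _ [N _ <-]; exact: gT.
  apply: ge_ereal_sup => _ [k [E [hE dE ->]]].
  apply/lee_addgt0Pr => e e0.
  have [N hN] := happ eta e e0.
  have := hN _ E (conj hE dE) => h.
  apply: (@le_trans _ _ ((g N eta + e)%:E)); first by rewrite lee_fin.
  rewrite EFinD leeD2r //; apply: ereal_sup_ubound; by exists N.
have Tcvg eta : (fun N => (g N eta)%:E) @ \oo --> T eta.
  by rewrite Tsup; exact: ereal_nondecreasing_cvgn.
have mg N : measurable_fun (Dsp : set (borel_forms R n)) (@EFin R \o (fun eta : borel_forms R n => g N eta)).
  apply/measurable_EFinP; apply: measurable_funTS; apply: cont_mble.
  exact: ps_cont.
have mT : measurable_fun (Dsp : set (borel_forms R n)) T.
  have := @emeasurable_fun_cvg _ (borel_forms R n) R (Dsp : set (borel_forms R n))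
    (fun N eta => (g N eta)%:E) T; apply => //.
have mabs v : measurable_fun (Dsp : set (borel_forms R n)) (@EFin R \o (fun eta : borel_forms R n => `|pairing eta v|)).
  apply/measurable_EFinP; apply: measurable_funTS; apply: cont_mble.
  exact: abs_pairing_cont.
have intsum (I : finType) (C : I -> set X) :
    (\int[sigma]_(eta in Dsp) (ps mu C eta)%:E = (\sum_(i : I) nrm (mu (C i)))%:E)%E.
  rewrite -sumEFin.
  under eq_integral do rewrite /ps -sumEFin.
  rewrite ge0_integral_sum //.
  all: try (by move=> i; exact: mabs).
  all: try (by move=> i eta _; rewrite lee_fin).
  by apply: eq_bigr => i _; rewrite hzon.
have intg N : (\int[sigma]_(eta in Dsp) (g N eta)%:E = (\sum_b nrm (mu (cell A H N b)))%:E)%E.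
  exact: intsum.
apply/eqP; rewrite eq_le; apply/andP; split.
  apply: ge_ereal_sup => _ [k [E [hE dE ->]]].
  rewrite -intsum; apply: ge0_le_integral => //.
  - by move=> eta _; rewrite lee_fin /ps; apply: sumr_ge0 => *.
  - apply/measurable_EFinP; apply: measurable_funTS; apply: cont_mble; exact: ps_cont.
  - move=> eta _; exact: (TV_ub (fun r : R => `|r|) (fun E => pairing eta (mu E)) (conj hE dE)).
rewrite (eq_integral (fun eta : borel_forms R n => limn (fun N => (g N eta)%:E))); last first.
  by move=> eta _; apply/esym/cvg_lim => //; exact: Tcvg.
rewrite monotone_convergence //.
all: try (by move=> N eta _; rewrite lee_fin /g /ps; apply: sumr_ge0 => * ).
all: try (by move=> eta _; exact: ndgE).
apply: lime_le.
  apply: ereal_nondecreasing_is_cvgn => a b ab; apply: ge0_le_integral => //.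
  all: try (by move=> eta _; rewrite lee_fin /g /ps; apply: sumr_ge0 => * ).
  all: try (by move=> eta _; exact: ndgE).
all: try (exact: mg).
near=> N; rewrite intg.
exact: (TV_ub nrm mu (pc N)).
Unshelve. all: by end_near.
Qed.
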